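(* Let $S$ be a semiring satisfying the standing assumptions below, let $m>1$, $n>1$, and let $A,B\in M_{m\times n}(S)$ be two distinct matrices with $r(A)=r(B)=1$. (i) If $A$ has more nonzero entries than $B$, then there exists $C\in M_{m\times n}(S)$ such that $r(A+C)=1$ and $r(B+C)=2$. (ii) If $A$ and $B$ have the same number of nonzero entries, then there exists $C\in M_{m\times n}(S)$ such that either $r(A+C)=1$ and $r(B+C)=2$, or $r(A+C)=2$ and $r(B+C)=1$.
   Context: A semiring $(S,+,\cdot)$ here means: $(S,+)$ is a commutative monoid with zero $0$, $(S,\cdot)$ is a commutative monoid with identity $1$, multiplication distributes over addition, and $0$ is absorbing. Standing assumptions on $S$: $S$ is additively idempotent ($a+a=a$), multiplicatively cancellative (for every nonzero $a$, $ba=ca$ implies $b=c$), and additively unit irreducible (if $a+b$ is a unit then $a$ or $b$ is a unit). For $A\in M_{m\times n}(S)$, the rank $r(A)$ is the least positive integer $k$ such that $A=BC$ for some $B\in M_{m\times k}(S)$, $C\in M_{k\times n}(S)$; $r(0)=0$. *)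

(* Defs.v *)
From HB Require Import structures.
From mathcomp Require Import all_boot all_order all_algebra.
Set Implicit Arguments. Unset Strict Implicit. Unset Printing Implicit Defensive.
Import GRing.Theory.
Local Open Scope ring_scope.

Definition sunit (S : comPzSemiRingType) (a : S) : Prop := exists b : S, a * b = 1.

Definition add_idempotent (S : comPzSemiRingType) : Prop :=
  forall a : S, a + a = a.
Definition mul_cancellative (S : comPzSemiRingType) : Prop :=
  forall a b c : S, a != 0 -> b * a = c * a -> b = c.
Definition add_unit_irreducible (S : comPzSemiRingType) : Prop :=
  forall a b : S, sunit (a + b) -> sunit a \/ sunit b.

Definition factors_through (S : comPzSemiRingType) (m n : nat)
  (A : 'M[S]_(m, n)) (k : nat) : Prop :=
  exists (B : 'M[S]_(m, k)) (C : 'M[S]_(k, n)), A = B *m C.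

(* srank A r  <->  r(A) = r : r(0) = 0, otherwise r is the least positive
   integer k such that A factors through k. *)
Definition srank (S : comPzSemiRingType) (m n : nat) (A : 'M[S]_(m, n))
  (r : nat) : Prop :=
  (A = 0 /\ r = 0%N) \/
  (A <> 0 /\ (0 < r)%N /\ factors_through A r /\
   forall k : nat, (0 < k)%N -> (k < r)%N -> ~ factors_through A k).

Definition nnz (S : comPzSemiRingType) (m n : nat) (A : 'M[S]_(m, n)) : nat :=
  #|[set ij : 'I_m * 'I_n | A ij.1 ij.2 != 0]|.

(* Main.v *)
Require Import Defs.
From mathcomp Require Import all_boot all_order all_algebra.
From mathcomp Require Import ring.
From Stdlib Require Import Classical.
Set Implicit Arguments. Unset Strict Implicit. Unset Printing Implicit Defensive.
Import GRing.Theory.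
Local Open Scope ring_scope.

Definition outer (S : comPzSemiRingType) (m n : nat) (u : 'I_m -> S) (v : 'I_n -> S)
  : 'M[S]_(m, n) := \matrix_(i, j) (u i * v j).

Definition del (S : comPzSemiRingType) (m : nat) (i : 'I_m) : 'I_m -> S :=
  fun k => if k == i then 1 else 0.
Arguments del {S m} i k.

Definition P1 (S : comPzSemiRingType) (m n : nat) (A B : 'M[S]_(m, n)) :=
  exists C : 'M[S]_(m, n), srank (A + C) 1 /\ srank (B + C) 2.

Lemma outerE (S : comPzSemiRingType) (m n : nat) (u : 'I_m -> S) (v : 'I_n -> S) i j :
  outer u v i j = u i * v j.
Proof. by rewrite mxE. Qed.

Lemma nz_mul (S : comPzSemiRingType) (Hcanc : mul_cancellative S) (a b : S) :
  a != 0 -> b != 0 -> a * b != 0.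
Proof.
move=> ha hb; apply/eqP => hab; move/eqP: ha; apply.
by apply: (Hcanc _ _ _ hb); rewrite hab mul0r.
Qed.

Lemma zsf (S : comPzSemiRingType) (Hidem : add_idempotent S) (a b : S) :
  a + b = 0 -> a = 0.
Proof. by move=> h; rewrite -(addr0 a) -h addrA Hidem. Qed.

Lemma nz_add (S : comPzSemiRingType) (Hidem : add_idempotent S) (a b : S) :
  a != 0 -> a + b != 0.
Proof. by move=> ha; apply/eqP => h; move/eqP: ha; apply; apply: zsf h. Qed.

Lemma exists_other (n : nat) (Hn : (1 < n)%N) (l : 'I_n) : exists j : 'I_n, j != l.
Proof.
have h0 : (0 < n)%N by apply: ltnW.
case: (eqVneq l (Ordinal h0)) => [->|hl]; last by exists (Ordinal h0); rewrite eq_sym.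
by exists (Ordinal Hn).
Qed.

Lemma fac1_outer (S : comPzSemiRingType) (m n : nat) (u : 'I_m -> S) (v : 'I_n -> S) :
  factors_through (outer u v) 1.
Proof.
exists (\matrix_(i < m, k < 1) u i), (\matrix_(k < 1, j < n) v j).
apply/matrixP => i j; rewrite !mxE big_ord1 !mxE //.
Qed.

Lemma fac2_outer (S : comPzSemiRingType) (m n : nat) (u p : 'I_m -> S) (v q : 'I_n -> S) :
  factors_through (outer u v + outer p q) 2.
Proof.
exists (\matrix_(i < m, k < 2) if k == ord0 then u i else p i),
       (\matrix_(k < 2, j < n) if k == ord0 then v j else q j).
apply/matrixP => i j; rewrite !mxE big_ord_recl big_ord1 !mxE /=.
by [].
Qed.

Lemma minor_fac1 (S : comPzSemiRingType) (m n : nat) (M : 'M[S]_(m, n)) :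
  factors_through M 1 -> forall i i' j j', M i j * M i' j' = M i j' * M i' j.
Proof.
move=> [P [Q ->]] i i' j j'; rewrite !mxE !big_ord1; ring.
Qed.

Lemma srank1_outer (S : comPzSemiRingType) (m n : nat) (u : 'I_m -> S) (v : 'I_n -> S) i j :
  u i * v j != 0 -> srank (outer u v) 1.
Proof.
move=> h; right; split.
  by move=> h0; move/eqP: h; apply; rewrite -outerE h0 mxE.
split=> //; split; first exact: fac1_outer.
by move=> k k0 k1; exfalso; move: k0 k1; case: k.
Qed.

Lemma srank2_minor (S : comPzSemiRingType) (m n : nat) (M : 'M[S]_(m, n)) i i' j j' :
  factors_through M 2 -> M i j * M i' j' != M i j' * M i' j -> srank M 2.
Proof.
move=> hf hm; right; split.
  by move=> h0; move: hm; rewrite h0 !mxE !mul0r eqxx.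
split=> //; split=> //.
move=> k k0 k1; have -> : k = 1%N by case: k k0 k1 => [|[|]].
by move=> h1; move: hm; rewrite (minor_fac1 h1) eqxx.
Qed.

Lemma srank1_inv (S : comPzSemiRingType) (m n : nat) (A : 'M[S]_(m, n)) :
  srank A 1 -> exists u v, A = outer u v /\ exists i j, u i * v j != 0.
Proof.
case=> [[_ //]|[hA [_ [[P [Q hPQ]] _]]]].
exists (fun i => P i ord0), (fun j => Q ord0 j).
have E : A = outer (fun i => P i ord0) (fun j => Q ord0 j).
  by apply/matrixP => i j; rewrite hPQ !mxE big_ord1.
split=> //.
case: (classic (exists i j, P i ord0 * Q ord0 j != 0)) => // hn.
exfalso; apply: hA; apply/matrixP => i j; rewrite E !mxE.
apply/eqP; apply: contraT => hne; exfalso; apply: hn; by exists i, j.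
Qed.

Lemma fac_tr (S : comPzSemiRingType) (m n : nat) (M : 'M[S]_(m, n)) k :
  factors_through M k -> factors_through M^T k.
Proof. by move=> [P [Q ->]]; exists Q^T, P^T; rewrite trmx_mul. Qed.

Lemma srank_tr (S : comPzSemiRingType) (m n : nat) (M : 'M[S]_(m, n)) k :
  srank M k -> srank M^T k.
Proof.
case=> [[-> ->]|[h0 [hk [hf hn]]]]; first by left; split=> //; apply/matrixP=> i j; rewrite !mxE.
right; split.
  move=> h; apply: h0; rewrite -[M]trmxK h; apply/matrixP=> i j; rewrite !mxE //.
split=> //; split; first exact: fac_tr.
move=> k' k0 k1 hf'; apply: (hn k' k0 k1); rewrite -[M]trmxK; exact: fac_tr.
Qed.

Lemma trD (S : comPzSemiRingType) (m n : nat) (X Y : 'M[S]_(m, n)) :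
  (X + Y)^T = X^T + Y^T.
Proof. by apply/matrixP=> i j; rewrite !mxE. Qed.

Lemma P1_tr (S : comPzSemiRingType) (m n : nat) (A B : 'M[S]_(m, n)) :
  P1 A^T B^T -> P1 A B.
Proof.
move=> [C [h1 h2]]; exists C^T.
have -> : A + C^T = (A^T + C)^T by rewrite trD trmxK.
have -> : B + C^T = (B^T + C)^T by rewrite trD trmxK.
by split; apply: srank_tr.
Qed.

Lemma outer_tr (S : comPzSemiRingType) (m n : nat) (u : 'I_m -> S) (v : 'I_n -> S) :
  (outer u v)^T = outer v u.
Proof. by apply/matrixP=> i j; rewrite !mxE mulrC. Qed.

Lemma T1 (S : comPzSemiRingType) (Hidem : add_idempotent S) (Hcanc : mul_cancellative S)
  (m n : nat) (Hn : (1 < n)%N) (u x : 'I_m -> S) (v y : 'I_n -> S) i1 :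
  u i1 != 0 -> x i1 = 0 -> (exists r l, x r * y l != 0) -> (exists i j, u i * v j != 0) ->
  P1 (outer u v) (outer x y).
Proof.
move=> hu hx [r [l hrl]] [i [j hij]].
have hxr : x r != 0 by apply: contraNneq hrl => ->; rewrite mul0r.
have hyl : y l != 0 by apply: contraNneq hrl => ->; rewrite mulr0.
have [j0 hj0] := exists_other Hn l.
exists (outer u (del j0)); split.
  have -> : outer u v + outer u (del j0) = outer u (fun k => v k + del j0 k).
    by apply/matrixP=> a b; rewrite !mxE mulrDr.
  apply: (srank1_outer (i:=i) (j:=j)); rewrite mulrDr; exact: nz_add.
apply: (srank2_minor (i:=i1) (i':=r) (j:=j0) (j':=l)); first exact: fac2_outer.
rewrite !mxE /del eqxx (eq_sym l j0) (negbTE hj0) hx !mul0r !mulr0 !add0r !addr0 mulr1 mul0r.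
by apply: nz_mul.
Qed.

Lemma SE (S : comPzSemiRingType) (Hidem : add_idempotent S) (Hcanc : mul_cancellative S)
  (m n : nat) (u x : 'I_m -> S) (v y : 'I_n -> S) i i' j j' :
  i' != i -> j' != j -> x i' * y j' != 0 ->
  x i * y j + u i * v j != x i * y j ->
  P1 (outer u v) (outer x y).
Proof.
move=> hi hj hb hne.
have hA : u i * v j != 0 by apply: contraNneq hne => ->; rewrite addr0.
exists (outer (fun k => u i * v j * del i k) (del j)); split.
  have -> : outer u v + outer (fun k => u i * v j * del i k) (del j) = outer u v.
    apply/matrixP=> a b; rewrite !mxE /del.
    case: (eqVneq a i) => [->|ha]; case: (eqVneq b j) => [->|hb'];
      by rewrite ?mulr1 ?mulr0 ?addr0 ?Hidem.
  exact: (srank1_outer (i:=i) (j:=j)).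
apply: (srank2_minor (i:=i) (i':=i') (j:=j) (j':=j')); first exact: fac2_outer.
rewrite !mxE /del !eqxx (negbTE hi) (negbTE hj) !mulr0 !mul0r !addr0 !mulr1.
apply/eqP => h; move/eqP: hne; apply; apply: (Hcanc _ _ _ hb).
rewrite h; ring.
Qed.

Lemma mul0S {S : comPzSemiRingType} (a : S) : 0 * a = 0.
Proof. exact: mul0r. Qed.
Lemma mulr0S {S : comPzSemiRingType} (a : S) : a * 0 = 0.
Proof. exact: mulr0. Qed.
Lemma add0S {S : comPzSemiRingType} (a : S) : 0 + a = a.
Proof. exact: add0r. Qed.
Lemma addr0S {S : comPzSemiRingType} (a : S) : a + 0 = a.
Proof. exact: addr0. Qed.

Lemma del_same {S : comPzSemiRingType} m (i : 'I_m) : del i i = 1 :> S.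
Proof. by rewrite /del eqxx. Qed.
Lemma del_diff {S : comPzSemiRingType} m (i k : 'I_m) : k != i -> del i k = 0 :> S.
Proof. by move=> h; rewrite /del (negbTE h). Qed.
Lemma del_diff' {S : comPzSemiRingType} m (i k : 'I_m) : i != k -> del i k = 0 :> S.
Proof. by move=> h; rewrite /del eq_sym (negbTE h). Qed.

Lemma SRa (S : comPzSemiRingType) (Hidem : add_idempotent S) (Hcanc : mul_cancellative S)
  (m n : nat) (u x : 'I_m -> S) (v y : 'I_n -> S) i i0 j j1 j2 :
  i0 != i -> x i0 = 0 -> u i * v j != 0 ->
  u i * v j1 * (x i * y j2) != u i * v j2 * (x i * y j1) ->
  P1 (outer u v) (outer x y).
Proof.
move=> hi0 hx hA hne.
exists (outer (del i0) (fun k => u i * v k)); split.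
  have -> : outer u v + outer (del i0) (fun k => u i * v k)
      = outer (fun r => u r + del i0 r * u i) v.
    by apply/matrixP=> a b; rewrite !mxE mulrDl mulrA.
  apply: (srank1_outer (i:=i) (j:=j)); rewrite mulrDl; exact: nz_add.
apply: (srank2_minor (i:=i) (i':=i0) (j:=j2) (j':=j1)); first exact: fac2_outer.
rewrite !mxE del_same (del_diff' hi0) hx.
by rewrite !mul0S !add0S !mul1r !addr0S mulrC [X in _ != X]mulrC.
Qed.

Lemma SRb (S : comPzSemiRingType) (Hidem : add_idempotent S) (Hcanc : mul_cancellative S)
  (m n : nat) (u x : 'I_m -> S) (v y : 'I_n -> S) i i0 j j' :
  i0 != i -> (forall k, k != i -> x k = 0) -> j' != j -> u i * v j' != 0 ->
  u i * v j * (x i * y j') = u i * v j' * (x i * y j) ->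
  x i * y j + u i * v j != x i * y j ->
  P1 (outer u v) (outer x y).
Proof.
move=> hi0 hx hj hA hab hne.
have hxi0 : x i0 = 0 by apply: hx.
exists (outer (del i0) (fun k => u i * v k) + outer (del i) (fun k => u i * v j * del j k)); split.
  have -> : outer u v + (outer (del i0) (fun k => u i * v k) + outer (del i) (fun k => u i * v j * del j k))
      = outer (fun r => u r + del i0 r * u i) v.
    apply/matrixP=> a b; rewrite !mxE.
    case: (eqVneq a i) => [->|ha].
      rewrite del_same (del_diff' hi0) !mul0S !mul1r add0S addr0S.
      case: (eqVneq b j) => [->|hb]; first by rewrite del_same mulr1 Hidem.
      by rewrite (del_diff hb) mulr0S addr0S.
    rewrite (del_diff ha) mul0S addr0S mulrDl mulrA //.
  apply: (srank1_outer (i:=i) (j:=j')); rewrite mulrDl; exact: nz_add.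
have -> : outer x y + (outer (del i0) (fun k => u i * v k) + outer (del i) (fun k => u i * v j * del j k))
    = outer (del i) (fun k => x i * y k + u i * v j * del j k) + outer (del i0) (fun k => u i * v k).
  apply/matrixP=> a b; rewrite !mxE.
  case: (eqVneq a i) => [->|ha].
    by rewrite del_same (del_diff' hi0) !mul0S !mul1r add0S !addr0S.
  by rewrite (hx _ ha) (del_diff ha) !mul0S !add0S addr0S.
apply: (srank2_minor (i:=i) (i':=i0) (j:=j) (j':=j')); first exact: fac2_outer.
rewrite !mxE !del_same (del_diff hi0) (del_diff hj) (del_diff' hi0) ?(mul0S, mulr0S, mul1r, mulr1, add0S, addr0S).
apply/eqP => h; move/eqP: hne; apply; apply: (Hcanc _ _ _ hA).
by rewrite h [LHS]mulrC hab [LHS]mulrC.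
Qed.

Lemma SRc (S : comPzSemiRingType) (Hidem : add_idempotent S) (Hcanc : mul_cancellative S)
  (m n : nat) (u x : 'I_m -> S) (v y : 'I_n -> S) i i0 j j0 :
  i0 != i -> j0 != j -> (forall k, k != i -> u k = 0 /\ x k = 0) ->
  (forall k, k != j -> u i * v k = 0 /\ x i * y k = 0) ->
  u i * v j != 0 ->
  x i * y j + u i * v j != u i * v j ->
  P1 (outer u v) (outer x y).
Proof.
move=> hi0 hj0 hux hab haj hne.
have h10 : (1 : S) != 0.
  by apply: contraNneq haj => h; rewrite -[u i * v j]mulr1 h mulr0S.
set C := outer (fun r => u i * v j * del i r + del i0 r) (fun k => del j k + del j0 k).
exists C; split.
  have -> : outer u v + C = C.
    apply/matrixP=> a b; rewrite !mxE.
    case: (eqVneq a i) => [->|ha].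
      case: (eqVneq b j) => [->|hb].
        by rewrite !del_same (del_diff' hi0) (del_diff' hj0) ?(mul0S, mulr0S, mul1r, mulr1, add0S, addr0S) Hidem.
      by rewrite (hab b hb).1 add0S.
    by rewrite (hux a ha).1 mul0S add0S.
  apply: (srank1_outer (i:=i0) (j:=j0)).
  by rewrite !del_same (del_diff hi0) (del_diff hj0) ?(mul0S, mulr0S, mul1r, mulr1, add0S, addr0S).
apply: (srank2_minor (i:=i) (i':=i0) (j:=j) (j':=j0)); first exact: fac2_outer.
rewrite !mxE !del_same (del_diff hi0) (del_diff hj0) (del_diff' hi0) (del_diff' hj0).
rewrite (hux i0 hi0).2 (hab j0 hj0).2 ?(mul0S, mulr0S, mul1r, mulr1, add0S, addr0S).
by [].
Qed.

Lemma neq_add_sym (S : comPzSemiRingType) (a b : S) :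
  a != b -> b + a = b -> a + b != a.
Proof. by move=> hab h; apply: contra_neq hab => h'; rewrite -h' addrC h. Qed.

Lemma SR (S : comPzSemiRingType) (Hidem : add_idempotent S) (Hcanc : mul_cancellative S)
  (m n : nat) (Hm : (1 < m)%N) (Hn : (1 < n)%N) (u x : 'I_m -> S) (v y : 'I_n -> S) i j :
  (forall k, k != i -> u k = 0 /\ x k = 0) ->
  u i * v j != 0 -> x i * y j != 0 -> u i * v j != x i * y j ->
  P1 (outer u v) (outer x y) \/ P1 (outer x y) (outer u v).
Proof.
move=> hux ha hb hne.
have [i0 hi0] := exists_other Hm i.
have hx : forall k, k != i -> x k = 0 by move=> k hk; exact: (hux k hk).2.
have hu : forall k, k != i -> u k = 0 by move=> k hk; exact: (hux k hk).1.
case: (classic (exists j1 j2, u i * v j1 * (x i * y j2) != u i * v j2 * (x i * y j1))).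
  move=> [j1 [j2 h]]; left; exact: (SRa (i0:=i0) (j:=j) Hidem Hcanc hi0 (hx _ hi0) ha h).
move=> hnot.
have hsim : forall j1 j2, u i * v j1 * (x i * y j2) = u i * v j2 * (x i * y j1).
  move=> j1 j2; apply/eqP; apply: contraT => h; exfalso; apply: hnot; by exists j1, j2.
case: (classic (exists j', j' != j /\ u i * v j' != 0)).
  move=> [j' [hj' haj']].
  have hbj' : x i * y j' != 0.
    apply: contraNneq (nz_mul Hcanc haj' hb) => h0.
    by rewrite -hsim h0 mulr0S.
  case: (eqVneq (x i * y j + u i * v j) (x i * y j)) => h.
    right; apply: (SRb (i0:=i0) Hidem Hcanc hi0 hu hj' hbj').
      by rewrite mulrC -hsim mulrC.
    exact: (neq_add_sym hne h).
  left; exact: (SRb (i0:=i0) Hidem Hcanc hi0 hx hj' haj' (hsim j j') h).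
move=> hnot2.
have hab : forall k, k != j -> u i * v k = 0 /\ x i * y k = 0.
  move=> k hk.
  have hak : u i * v k = 0.
    apply/eqP; apply: contraT => h; exfalso; apply: hnot2; by exists k; split.
  split=> //; apply: (Hcanc _ _ _ ha); rewrite mul0S mulrC hsim hak mul0S //.
have [j0 hj0] := exists_other Hn j.
have hxu : forall k, k != i -> x k = 0 /\ u k = 0 by move=> k hk; have [? ?] := hux k hk.
have hba : forall k, k != j -> x i * y k = 0 /\ u i * v k = 0 by move=> k hk; have [? ?] := hab k hk.
case: (eqVneq (x i * y j + u i * v j) (u i * v j)) => h.
  right; apply: (SRc (i0:=i0) (j0:=j0) Hidem Hcanc hi0 hj0 hxu hba hb).
  rewrite addrC; apply: neq_add_sym; [by rewrite eq_sym | by rewrite addrC].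
left; exact: (SRc Hidem Hcanc hi0 hj0 hux hab ha h).
Qed.

Lemma mul_eq0S (S : comPzSemiRingType) (Hcanc : mul_cancellative S) (a b : S) :
  (a * b == 0) = (a == 0) || (b == 0).
Proof.
case: (eqVneq a 0) => [->|ha]; first by rewrite mul0S eqxx.
case: (eqVneq b 0) => [->|hb]; first by rewrite mulr0S eqxx.
by rewrite (negbTE (nz_mul Hcanc ha hb)).
Qed.

Lemma SS (S : comPzSemiRingType) (Hidem : add_idempotent S) (Hcanc : mul_cancellative S)
  (m n : nat) (Hm : (1 < m)%N) (Hn : (1 < n)%N) (u x : 'I_m -> S) (v y : 'I_n -> S) :
  (forall k, (u k == 0) = (x k == 0)) -> (forall k, (v k == 0) = (y k == 0)) ->
  outer u v <> outer x y ->
  P1 (outer u v) (outer x y) \/ P1 (outer x y) (outer u v).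
Proof.
move=> hsu hsv hAB.
have key : forall i j, (u i * v j == 0) = (x i * y j == 0).
  by move=> i j; rewrite !mul_eq0S // hsu hsv.
have [i [j hne]] : exists i j, u i * v j != x i * y j.
  case: (classic (exists i j, u i * v j != x i * y j)) => // hn.
  exfalso; apply: hAB; apply/matrixP => i j; rewrite !mxE.
  apply/eqP; apply: contraT => h; exfalso; apply: hn; by exists i, j.
have ha : u i * v j != 0.
  apply: contra_neq hne => h; rewrite h; apply/eqP; by rewrite eq_sym -key h.
have hb : x i * y j != 0 by rewrite -key.
case: (classic (exists i' j', [/\ i' != i, j' != j & u i' * v j' != 0])).
  move=> [i' [j' [hi' hj' ha']]].
  have hb' : x i' * y j' != 0 by rewrite -key.
  case: (eqVneq (x i * y j + u i * v j) (x i * y j)) => h.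
    right; apply: (SE Hidem Hcanc hi' hj' ha'); exact: (neq_add_sym hne h).
  left; exact: (SE Hidem Hcanc hi' hj' hb' h).
move=> hno.
have hz : forall i' j', i' != i -> j' != j -> u i' * v j' = 0.
  move=> i' j' hi' hj'; apply/eqP; apply: contraT => h; exfalso; apply: hno; by exists i', j'.
case: (classic (exists i', i' != i /\ u i' != 0)).
  move=> [i' [hi' hu']].
  have hv : forall k, k != j -> v k = 0 /\ y k = 0.
    move=> k hk; have := hz _ _ hi' hk; move/eqP; rewrite mul_eq0S // (negbTE hu') /= => hvk.
    by split; apply/eqP; rewrite // -hsv.
  have := SR Hidem Hcanc Hn Hm (u:=v) (x:=y) (v:=u) (y:=x) (i:=j) (j:=i) hv.
  rewrite ![v j * _]mulrC ![y j * _]mulrC => /(_ ha hb hne) [h|h]; [left|right];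
    apply: P1_tr; by rewrite !outer_tr.
move=> hno2.
have hux : forall k, k != i -> u k = 0 /\ x k = 0.
  move=> k hk.
  have huk : u k = 0 by apply/eqP; apply: contraT => h; exfalso; apply: hno2; by exists k.
  by split=> //; apply/eqP; rewrite -hsu huk.
exact: (SR Hidem Hcanc Hm Hn hux ha hb hne).
Qed.

Lemma TT (S : comPzSemiRingType) (Hidem : add_idempotent S) (Hcanc : mul_cancellative S)
  (m n : nat) (Hm : (1 < m)%N) (Hn : (1 < n)%N) (u x : 'I_m -> S) (v y : 'I_n -> S) :
  (exists i j, u i * v j != 0) -> (exists i j, x i * y j != 0) ->
  ((exists i1, u i1 != 0 /\ x i1 = 0) \/ (exists j1, v j1 != 0 /\ y j1 = 0)) ->
  P1 (outer u v) (outer x y).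
Proof.
move=> [i [j ha]] [r [l hb]] [[i1 [h1 h2]]|[j1 [h1 h2]]].
  exact: (T1 Hidem Hcanc Hn h1 h2 (ex_intro _ r (ex_intro _ l hb)) (ex_intro _ i (ex_intro _ j ha))).
apply: P1_tr; rewrite !outer_tr.
apply: (T1 Hidem Hcanc Hm h1 h2).
  by exists l, r; rewrite mulrC.
by exists j, i; rewrite mulrC.
Qed.

Theorem lemma4p1 (S : comPzSemiRingType)
  (Hidem : add_idempotent S) (Hcanc : mul_cancellative S)
  (Hirr : add_unit_irreducible S)
  (m n : nat) (Hm : (1 < m)%N) (Hn : (1 < n)%N)
  (A B : 'M[S]_(m, n)) (HAB : A <> B)
  (HA : srank A 1) (HB : srank B 1) :
  ((nnz B < nnz A)%N ->
     exists C : 'M[S]_(m, n), srank (A + C) 1 /\ srank (B + C) 2) /\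
  (nnz A = nnz B ->
     exists C : 'M[S]_(m, n),
       (srank (A + C) 1 /\ srank (B + C) 2) \/
       (srank (A + C) 2 /\ srank (B + C) 1)).
Proof.
have [u [v [EA wA]]] := srank1_inv HA.
have [x [y [EB wB]]] := srank1_inv HB.
subst A B.
split.
  move=> hlt.
  case: (classic ((exists i1, u i1 != 0 /\ x i1 = 0) \/ (exists j1, v j1 != 0 /\ y j1 = 0))).
    by move=> h; exact: (TT Hidem Hcanc Hm Hn wA wB h).
  move=> hno; exfalso.
  suff : (nnz (outer u v) <= nnz (outer x y))%N by rewrite leqNgt hlt.
  apply: subset_leq_card; apply/subsetP => -[a b]; rewrite !inE !mxE /= => hab.
  rewrite mul_eq0S // negb_or in hab; case/andP: hab => hua hvb.
  have hxa : x a != 0.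
    apply/eqP => h; apply: hno; left; by exists a.
  have hyb : y b != 0.
    apply/eqP => h; apply: hno; right; by exists b.
  exact: nz_mul.
move=> heq.
case: (classic ((exists i1, u i1 != 0 /\ x i1 = 0) \/ (exists j1, v j1 != 0 /\ y j1 = 0))).
  move=> h; have [C hC] := TT Hidem Hcanc Hm Hn wA wB h; exists C; by left.
move=> hno1.
case: (classic ((exists i1, x i1 != 0 /\ u i1 = 0) \/ (exists j1, y j1 != 0 /\ v j1 = 0))).
  move=> h; have [C [h1 h2]] := TT Hidem Hcanc Hm Hn wB wA h; exists C; by right.
move=> hno2.
have hsu : forall k, (u k == 0) = (x k == 0).
  move=> k; case: (eqVneq (u k) 0) => hu; case: (eqVneq (x k) 0) => hx //; exfalso.
    by apply: hno2; left; exists k.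
  by apply: hno1; left; exists k.
have hsv : forall k, (v k == 0) = (y k == 0).
  move=> k; case: (eqVneq (v k) 0) => hu; case: (eqVneq (y k) 0) => hx //; exfalso.
    by apply: hno2; right; exists k.
  by apply: hno1; right; exists k.
case: (SS Hidem Hcanc Hm Hn hsu hsv HAB) => [[C hC]|[C [h1 h2]]]; exists C; [left | right] => //.
Qed.
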